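(* Let $k\ge1$ and consider the cycle $C_{4k}$ with consecutive vertices $u,v,w$ (so $u\sim v$ and $v\sim w$). Let $\alpha\ne0$ be real, give the edges $\{u,v\}$ and $\{v,w\}$ weight $1/\alpha$ and all other edges weight $1$. If $|\alpha|>\sqrt{2k-1}$, then $v$ is sedentary.
   Context: For a weighted graph with weighted adjacency matrix $A$, $U(t)=e^{itA}$. A vertex $u$ is sedentary if $\inf_{t>0}|U(t)_{u,u}|\ge C$ for some constant $0<C\le1$. *)

(* Defs.v *)
From HB Require Import structures.
From mathcomp Require Import all_boot all_order all_algebra.
From mathcomp Require Import all_classical all_reals all_analysis.
From mathcomp Require Import complex.
Import Order.TTheory GRing.Theory Num.Theory ComplexField.
Import numFieldNormedType.Exports numFieldTopology.Exports.

Set Implicit Arguments.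
Unset Strict Implicit.
Unset Printing Implicit Defensive.

Local Open Scope ring_scope.
Local Open Scope classical_set_scope.

(* m-th power of a square matrix (works for any size n, including n not of the form _.+1) *)
Definition mxpow (T : pzRingType) (n : nat) (M : 'M[T]_n) (m : nat) : 'M[T]_n :=
  iter m (mulmx M) 1%:M.

Definition expmx (R : realType) (n : nat) (M : 'M[R[i]]_n) : 'M[R[i]]_n :=
  \matrix_(a, b)
    lim ((fun N : nat => (\sum_(m < N) (mxpow M m) a b / (m`!)%:R : (R[i])^o)) @ \oo).

Definition transition (R : realType) (n : nat) (A : 'M[R]_n) (t : R) : 'M[R[i]]_n :=
  expmx ((('i * t%:C)%C) *: map_mx (fun x : R => x%:C%C) A).

Definition sedentary (R : realType) (n : nat) (A : 'M[R]_n) (x : 'I_n) : Prop :=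
  exists C : R, 0 < C <= 1 /\
    forall t : R, 0 < t -> (C%:C)%C <= `| transition A t x x |.

Definition cyc_adj (n : nat) (a b : 'I_n) : bool :=
  ((val b == (val a).+1 %% n) || (val a == (val b).+1 %% n))%N.

Definition cycle_weighted (R : realType) (n : nat) (alpha : R) (u v w : 'I_n) : 'M[R]_n :=
  \matrix_(a, b)
    if cyc_adj a b then
      (if [|| (a == u) && (b == v), (a == v) && (b == u),
              (a == v) && (b == w) | (a == w) && (b == v)]
       then alpha^-1 else 1)
    else 0.

(* Main.v *)
Require Import Defs.
From HB Require Import structures.
From mathcomp Require Import all_boot all_order all_algebra.
From mathcomp Require Import all_classical all_reals all_analysis.
From mathcomp Require Import complex.
Import Order.TTheory GRing.Theory Num.Theory ComplexField.
Import numFieldNormedType.Exports numFieldTopology.Exports.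
Local Open Scope ring_scope.

Section Spec.
Local Set Implicit Arguments.
Local Unset Strict Implicit.
Local Open Scope sesquilinear_scope.
Lemma spec_decomp (C : numClosedFieldType) n (M : 'M[C]_n) :
  M \is hermsymmx ->
  M = (spectralmx M)^t* *m diag_mx (spectral_diag M) *m spectralmx M.
Proof.
move=> HM; have /orthomx_spectralP {1}-> := hermitian_normalmx HM.
by rewrite invmx_unitary // spectral_unitarymx.
Qed.

Lemma unitary_tl (C : numClosedFieldType) n (P : 'M[C]_n) :
  P \is unitarymx -> P^t* *m P = 1%:M.
Proof.
move=> PU; rewrite -invmx_unitary //; apply: mulVmx; exact: unitarymx_unit.
Qed.

Lemma unitary_tr (C : numClosedFieldType) n (P : 'M[C]_n) :
  P \is unitarymx -> P *m P^t* = 1%:M.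
Proof. by move/unitarymxP. Qed.

Lemma mxpow_spec (C : numClosedFieldType) n (M : 'M[C]_n) (c : C) m :
  M \is hermsymmx ->
  mxpow (c *: M) m = (spectralmx M)^t* *m
     diag_mx (\row_j (c * spectral_diag M 0 j) ^+ m) *m spectralmx M.
Proof.
move=> HM; set P := spectralmx M; set d := spectral_diag M.
have PU : P \is unitarymx by exact: spectral_unitarymx.
elim: m => [|m IH].
  rewrite /=.
  have -> : diag_mx (\row_j (c * d 0 j) ^+ 0) = 1%:M :> 'M[C]_n.
    by apply/matrixP => i j; rewrite !mxE expr0.
  by rewrite mulmx1 unitary_tl.
rewrite /mxpow iterS -/(mxpow _ m) IH {1}(spec_decomp HM) -/P -/d.
rewrite -scalemxAl !mulmxA -[P^t* *m diag_mx d *m P *m P^t*]mulmxA unitary_tr // mulmx1.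
rewrite -[P^t* *m diag_mx d *m diag_mx _]mulmxA mulmx_diag scalemxAl scalemxAl.
rewrite -scalemxAl scalemxAr.
congr (_ *m _ *m _); apply/matrixP => i j; rewrite !mxE.
by case: (i == j); rewrite ?mulr1n ?mulr0n ?mulr0 // exprS mulrA.
Qed.

Lemma mxpow_entry (C : numClosedFieldType) n (M : 'M[C]_n) (c : C) m v :
  M \is hermsymmx ->
  mxpow (c *: M) m v v = \sum_j (((spectralmx M j v)^* * spectralmx M j v) *
     (c * spectral_diag M 0 j) ^+ m).
Proof.
move=> HM; rewrite mxpow_spec // mxE; apply: eq_bigr => j _.
rewrite mul_mx_diag !mxE mulrAC.
by []. Qed.

Lemma wsum1 (C : numClosedFieldType) n (M : 'M[C]_n) v :
  \sum_j ((spectralmx M j v)^* * spectralmx M j v) = 1.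
Proof.
have := unitary_tl (spectral_unitarymx M) => /matrixP/(_ v v).
rewrite !mxE eqxx mulr1n => <-; apply: eq_bigr => j _; by rewrite !mxE.
Qed.

Lemma ker_spec (C : numClosedFieldType) n (M : 'M[C]_n) (x : 'cV[C]_n) j :
  M \is hermsymmx -> M *m x = 0 -> spectral_diag M 0 j != 0 ->
  (spectralmx M *m x) j 0 = 0.
Proof.
move=> HM Mx dj.
have E := spec_decomp HM.
set P := spectralmx M in E *; set d := spectral_diag M in E dj *.
have : P *m M *m x = 0 by rewrite -mulmxA Mx mulmx0.
rewrite {1}E !mulmxA unitary_tr ?spectral_unitarymx // mul1mx.
rewrite -mulmxA => /matrixP/(_ j 0); rewrite mul_diag_mx !mxE.
by move/eqP; rewrite mulf_eq0 (negPf dj) /= => /eqP.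
Qed.

Lemma CS_bound (C : numClosedFieldType) n (M : 'M[C]_n) (x : 'cV[C]_n) v :
  M \is hermsymmx -> M *m x = 0 ->
  `|x v 0| ^+ 2 <= (\sum_(j | spectral_diag M 0 j == 0)
        ((spectralmx M j v)^* * spectralmx M j v)) * \sum_i ((x i 0)^* * x i 0).
Proof.
move=> HM Mx; set P := spectralmx M; set d := spectral_diag M.
have PU : P \is unitarymx by exact: spectral_unitarymx.
pose y := P *m x.
pose a := \row_j (if d 0 j == 0 then P j v else 0).
pose b := \row_j y j 0.
have := (CauchySchwarz (@dotmx C n) b a).1.
have yz j : d 0 j != 0 -> y j 0 = 0 by move=> dj; exact: ker_spec.
have xv : x = P^t* *m y by rewrite /y mulmxA unitary_tl // mul1mx.
have E1 : dotmx b a = x v 0.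
  rewrite dotmxE xv !mxE; apply: eq_bigr => j _; rewrite !mxE.
  case: eqP => [_|/eqP dj]; first by rewrite mulrC.
  by move: (yz j dj); rewrite /y mxE => ->; rewrite mul0r mulr0.
have E2 : dotmx b b = \sum_i (x i 0)^* * x i 0.
  have : (y^t* *m y) 0 0 = (x^t* *m x) 0 0.
    by rewrite /y trmx_mul map_mxM mulmxA -[_ *m P^t* *m P]mulmxA unitary_tl // mulmx1.
  rewrite !mxE => H; rewrite dotmxE !mxE.
  rewrite (eq_bigr (fun j => (y j 0)^* * y j 0)); last first.
    by move=> j _; rewrite !mxE mulrC.
  rewrite (eq_bigr (fun j => y^t* 0 j * y j 0)); last by move=> j _; rewrite !mxE.
  rewrite H; apply: eq_bigr => i _; by rewrite !mxE.
have E3 : dotmx a a = \sum_(j | d 0 j == 0) (P j v)^* * P j v.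
  rewrite dotmxE !mxE [RHS]big_mkcond /=; apply: eq_bigr => j _; rewrite !mxE.
  by case: eqP => _; rewrite ?mul0r // mulrC.
by move=> H; rewrite -E1 -E2 -E3 mulrC; exact H.
Qed.

End Spec.

Section Ana.
Local Open Scope classical_set_scope.
Local Open Scope complex_scope.
Variable R : realType.

Lemma normC_real (r : R) : `|r%:C| = (`|r|)%:C.
Proof. by rewrite normc_def /= expr0n addr0 sqrtr_sqr. Qed.

Lemma cvgC (a : nat -> R) (l : R) : a n @[n --> \oo] --> l ->
  ((a n)%:C : (R[i])^o) @[n --> \oo] --> (l%:C : (R[i])^o).
Proof.
move=> /cvgrPdist_lt H; apply/cvgrPdist_lt => eps eps0.
have e0 : 0 < complex.Re eps by move: eps0; rewrite ltcE => /andP[_ h]; exact: h.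
have eE : eps = (complex.Re eps)%:C.
  by move: eps0 {e0}; case: eps => a0 b0; rewrite ltcE /= => /andP[/eqP -> _].
near=> N. rewrite -rmorphB. rewrite normC_real. rewrite eE ltcR.
near: N; exact: (H _ e0).
Unshelve. all: by end_near.
Qed.

Lemma cvg_big (I : Type) (r : seq I) (f : I -> nat -> (R[i])^o) (l : I -> (R[i])^o) :
  (forall j, f j n @[n --> \oo] --> l j) ->
  \sum_(j <- r) f j n @[n --> \oo] --> \sum_(j <- r) l j.
Proof.
move=> H; elim: r => [|j r IH].
  have -> : (fun n => \sum_(j <- [::]) f j n) = fun _ => 0.
    by apply/funext => n; rewrite big_nil.
  rewrite big_nil; exact: cvg_cst.
have -> : (fun n => \sum_(i <- j :: r) f i n) =
  (fun n => f j n) + (fun n => \sum_(i <- r) f i n).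
  by apply/funext => n; rewrite big_cons.
rewrite big_cons; exact: (cvgD (H j) IH).
Qed.

Lemma iexp_even q : ('i : R[i]) ^+ q.*2 = ((-1) ^+ q)%:C.
Proof. by rewrite -muln2 mulnC exprM sqr_i rmorphXn rmorphN1. Qed.

Lemma iexp_odd q : ('i : R[i]) ^+ q.*2.+1 = 'i * ((-1) ^+ q)%:C.
Proof. by rewrite exprS iexp_even. Qed.

Lemma term_eq (th : R) m : ('i * th%:C) ^+ m / (m`!)%:R =
  (cos_coeff th m)%:C + 'i * (sin_coeff th m)%:C :> R[i].
Proof.
rewrite /cos_coeff /sin_coeff /= exprMn.
move: (odd_double_half m) => <-; move: (m./2) (odd m) => q [] /=.
  rewrite add1n /= odd_double /= uphalf_double iexp_odd add0n doubleK.
  rewrite !mul0r rmorph0 add0r !mul1r !rmorphM fmorphV rmorph_nat !rmorphXn.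
  by rewrite !mulrA.
rewrite !add0n odd_double /= doubleK iexp_even.
rewrite !mul0r rmorph0 mulr0 addr0 !mul1r !rmorphM fmorphV rmorph_nat !rmorphXn.
by [].
Qed.
Definition ex (th : R) : R[i] := (cos th)%:C + 'i * (sin th)%:C.

Lemma cvg_cos (th : R) : series (cos_coeff th) n @[n --> \oo] --> cos th.
Proof. rewrite unlock; exact: is_cvg_series_cos_coeff. Qed.
Lemma cvg_sin (th : R) : series (sin_coeff th) n @[n --> \oo] --> sin th.
Proof. rewrite unlock; exact: is_cvg_series_sin_coeff. Qed.

Lemma cvg_ex (th : R) :
  (\sum_(m < N) ('i * th%:C) ^+ m / (m`!)%:R : (R[i])^o) @[N --> \oo] --> (ex th : (R[i])^o).
Proof.
have -> : (fun N => \sum_(m < N) ('i * th%:C) ^+ m / (m`!)%:R : (R[i])^o) =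
   (fun N => ((series (cos_coeff th) N)%:C : (R[i])^o) +
   'i * (series (sin_coeff th) N)%:C).
  apply/funext => N; rewrite /series /= !big_mkord.
  rewrite (eq_bigr _ (fun (m : 'I_N) _ => term_eq th m)) big_split /= -mulr_sumr !rmorph_sum.
  by [].
apply: cvgD; first exact: cvgC (cvg_cos th).
apply: cvgMr; exact: cvgC (cvg_sin th).
Qed.

Lemma norm_ex (th : R) : `|ex th| = 1.
Proof.
rewrite normc_def /ex /= !mul0r !mul1r !subr0 !add0r !addr0 cos2Dsin2.
by rewrite sqrtr1.
Qed.

Lemma ex0 : ex 0 = 1.
Proof. by rewrite /ex cos0 sin0 rmorph0 mulr0 addr0. Qed.


Lemma real_entry (z : R[i]) : z \is Num.real -> z = (complex.Re z)%:C.
Proof.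
rewrite realE; case: z => a b; rewrite !lecE /= => /orP[] /andP[/eqP h _]; first [by rewrite h | by rewrite -h].

Qed.

Lemma U_entry n (A : 'M[R]_n) (t : R) v :
  map_mx (fun x : R => x%:C) A \is hermsymmx ->
  transition A t v v =
  \sum_j ((Num.conj (spectralmx (map_mx (fun x : R => x%:C) A) j v) *
            spectralmx (map_mx (fun x : R => x%:C) A) j v) *
     ex (t * complex.Re (spectral_diag (map_mx (fun x : R => x%:C) A) 0 j))).
Proof.
move=> HM; rewrite /transition /expmx mxE.
set M := map_mx _ A in HM *.
set P := spectralmx M; set d := spectral_diag M.
have dR j : d 0 j = (complex.Re (d 0 j))%:C.
  apply: real_entry; have /mxOverP := hermitian_spectral_diag_real HM.
  by apply.
have -> : (fun N => \sum_(m < N) mxpow (('i * t%:C) *: M) m v v / (m`!)%:R : (R[i])^o) =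
  (fun N => \sum_j ((Num.conj (P j v) * P j v) *
     \sum_(m < N) ('i * (t * complex.Re (d 0 j))%:C) ^+ m / (m`!)%:R)).
  apply/funext => N.
  rewrite (eq_bigr (fun m : 'I_N => \sum_j ((Num.conj (P j v) * P j v) *
     (('i * (t * complex.Re (d 0 j))%:C) ^+ m / (m`!)%:R)))); last first.
    move=> m _; rewrite mxpow_entry // mulr_suml; apply: eq_bigr => j _.
    rewrite -/d; set r := complex.Re (d 0 j); rewrite (dR j : d 0 j = r%:C) rmorphM !mulrA.
    by [].
  by rewrite exchange_big; apply: eq_bigr => j _; rewrite mulr_sumr.
have H : (fun N => \sum_j ((Num.conj (P j v) * P j v) *
     \sum_(m < N) ('i * (t * complex.Re (d 0 j))%:C) ^+ m / (m`!)%:R) : (R[i])^o)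
   @ \oo --> (\sum_j ((Num.conj (P j v) * P j v) * ex (t * complex.Re (d 0 j))) : (R[i])^o).
  apply: cvg_big => j; apply: cvgMr; exact: cvg_ex.
exact: (cvg_lim (@norm_hausdorff _ _) H).
Qed.
Lemma U_bound n (A : 'M[R]_n) (t : R) v :
  map_mx (fun x : R => x%:C) A \is hermsymmx ->
  2 * (\sum_(j | spectral_diag (map_mx (fun x : R => x%:C) A) 0 j == 0)
        (Num.conj (spectralmx (map_mx (fun x : R => x%:C) A) j v) *
            spectralmx (map_mx (fun x : R => x%:C) A) j v)) - 1
   <= `|transition A t v v|.
Proof.
move=> HM; rewrite U_entry //.
set M := map_mx _ A in HM *.
set P := spectralmx M; set d := spectral_diag M.
set w := fun j => Num.conj (P j v) * P j v.
have w0 j : 0 <= w j by rewrite /w mulrC mul_conjC_ge0.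
have ws := wsum1 M v; rewrite -/P in ws.
rewrite -/w; set S := \sum_(j | _) w j.
rewrite [X in `|X|](bigID (fun j => d 0 j == 0)) /=.
rewrite [X in `|X + _|](eq_bigr (fun j => w j)); last first.
  by move=> j /eqP ->; rewrite /= mulr0 ex0 mulr1.
rewrite -/S.
rewrite (bigID (fun j => d 0 j == 0)) /= -/w -/S in ws.
have S0 : 0 <= S by apply: sumr_ge0.
apply: le_trans (lerB_normD _ _).
rewrite ger0_norm // mulr2n mulrDl mul1r -addrA lerD2l.
rewrite -ws opprD addrA subrr add0r lerN2.
apply: (le_trans (ler_norm_sum _ _ _)); apply: ler_sum => j _.
by rewrite normrM norm_ex mulr1 ger0_norm //; apply: w0.
Qed.

Lemma sed_from_vec n (A : 'M[R]_n) v (xr : 'I_n -> R) (Nr C : R) :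
  (forall a b, A a b = A b a) -> xr v = 1 ->
  (forall a, \sum_b A a b * xr b = 0) ->
  \sum_b xr b ^+ 2 = Nr -> 0 < Nr -> C <= 2 / Nr - 1 ->
  forall t, (C%:C) <= `|transition A t v v|.
Proof.
move=> Asym xv Ax xn N0 CN t.
have cr (r : R) : Num.conj (r%:C) = r%:C := conjc_real r.
set M := map_mx (fun x : R => x%:C) A.
have HM : M \is hermsymmx.
  apply/is_hermitianmxP; rewrite expr0 scale1r; apply/matrixP => a b.
  by rewrite !mxE cr Asym.
pose x : 'cV[R[i]]_n := \col_i (xr i)%:C.
have Mx : M *m x = 0.
  apply/matrixP => a j; rewrite !mxE.
  rewrite (eq_bigr (fun b => (A a b * xr b)%:C)); last first.
    by move=> b _; rewrite !mxE rmorphM.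
  by rewrite -rmorph_sum Ax.
have CS := CS_bound v HM Mx.
have x1 : x v 0 = 1 by rewrite mxE xv.
have Nx : \sum_i Num.conj (x i 0) * x i 0 = Nr%:C.
  rewrite -xn rmorph_sum; apply: eq_bigr => i _; rewrite !mxE.
  by rewrite cr -rmorphM expr2.
rewrite x1 normr1 expr1n Nx in CS.
apply: le_trans (U_bound _ _ t v HM).
set S := \sum_(j | _) _ in CS *.
have NC : 0 < Nr%:C by rewrite ltcR.
have SN : Nr%:C^-1 <= S by rewrite -[Nr%:C^-1]mul1r ler_pdivrMr.
apply: (@le_trans _ _ (2 * Nr%:C^-1 - 1)); last first.
  by rewrite lerD2r ler_pM2l // ltr0n.
have E : (2 * Nr%:C^-1 - 1) = (2 / Nr - 1)%:C by rewrite rmorphB rmorphM fmorphV rmorph_nat rmorph1.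
by rewrite E lecR.
Qed.

End Ana.

Section CW.
Variable R : realType.
Lemma cw_sym n (alpha : R) (u v w a b : 'I_n) :
  cycle_weighted alpha u v w a b = cycle_weighted alpha u v w b a.
Proof.
rewrite !mxE /cyc_adj orbC; case: (_ || _) => //.
by case: (a == u); case: (b == v); case: (a == v); case: (b == u);
   case: (a == w); case: (b == w).
Qed.

End CW.

From mathcomp Require Import zify ring lra.
Section Graph.
Variable R : realType.
Variables (k : nat) (alpha : R) (u v w : 'I_(4 * k)).
Hypotheses (k1 : (1 <= k)%N) (uv : cyc_adj u v) (vw : cyc_adj v w) (uw : u != w).

Local Notation n := (4 * k)%N.
Local Notation A := (cycle_weighted alpha u v w).
Local Notation beta := (alpha^-1).

Lemma modS_if (x m : nat) : (x < m)%N -> (x.+1 %% m)%N = (if x.+1 == m then 0 else x.+1)%N.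
Proof.
move=> h; case: eqP => [->|ne]; first by rewrite modnn.
by rewrite modn_small //; lia.
Qed.

Lemma adjE (a b : 'I_n) : cyc_adj a b =
  [|| (val b == (val a).+1) && ((val a).+1 != n),
      ((val a).+1 == n) && (val b == 0%N),
      (val a == (val b).+1) && ((val b).+1 != n) |
      ((val b).+1 == n) && (val a == 0%N)].
Proof.
rewrite /cyc_adj !modS_if ?ltn_ord //.
have := ltn_ord a; have := ltn_ord b.
by case: ifP; case: ifP; lia.
Qed.

Lemma ordE (a b : 'I_n) : (a == b) = (val a == val b).
Proof. by []. Qed.

Lemma NB (b : 'I_n) : cyc_adj v b -> (b == u) || (b == w).
Proof.
move: uv vw uw; rewrite !adjE !ordE => h1 h2 h3.
have := ltn_ord u; have := ltn_ord v; have := ltn_ord w; have := ltn_ord b.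
lia.
Qed.

Lemma adj_sym (a b : 'I_n) : cyc_adj a b = cyc_adj b a.
Proof. by rewrite /cyc_adj orbC. Qed.

Lemma Aadj (a b : 'I_n) : cyc_adj a b ->
  A a b = if (a == v) || (b == v) then beta else 1.
Proof.
move=> ab; rewrite mxE ab.
case av: (a == v).
  move/eqP: av => av; subst a.
  by case/orP: (NB _ ab) => ->; rewrite /= ?orbT.
case bv: (b == v).
  move/eqP: bv => bv; subst b; 
  by rewrite adj_sym in ab; case/orP: (NB _ ab) => ->; rewrite /= ?orbT ?andbT.
by rewrite !andbF.
Qed.

Lemma nonadj (a b : 'I_n) : ~~ cyc_adj a b -> A a b = 0.
Proof. by move=> h; rewrite mxE (negPf h). Qed.

Lemma ltv (a : 'I_n) : (val a < n)%N.
Proof. exact: ltn_ord. Qed.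

Lemma apP (a : 'I_n) : ((if (val a).+1 == n then 0 else (val a).+1) < n)%N.
Proof. have := ltv a; have := ltn_ord a; case: ifP; lia. Qed.
Definition ap (a : 'I_n) : 'I_n := Ordinal (apP a).
Lemma amP (a : 'I_n) : ((if val a == 0%N then (n - 1)%N else (val a - 1)%N) < n)%N.
Proof. have := ltv a; have := ltn_ord a; case: ifP; lia. Qed.
Definition am (a : 'I_n) : 'I_n := Ordinal (amP a).

Lemma adj_ap a : cyc_adj a (ap a).
Proof. rewrite adjE /=; have := ltv a; have := ltn_ord a; case: ifP; lia. Qed.
Lemma adj_am a : cyc_adj a (am a).
Proof. rewrite adjE /=; have := ltv a; have := ltn_ord a; case: ifP; lia. Qed.
Lemma am_ap a : am a != ap a.
Proof. rewrite ordE /=; have := ltv a; have := ltn_ord a; case: ifP; case: ifP; lia. Qed.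
Lemma adj_only a b : cyc_adj a b -> (b == ap a) || (b == am a).
Proof.
rewrite adjE !ordE /=; have := ltv a; have := ltn_ord a; have := ltv b.
case: ifP; case: ifP; lia.
Qed.

Lemma row_sum (a : 'I_n) (g : 'I_n -> R) :
  \sum_b A a b * g b = A a (ap a) * g (ap a) + A a (am a) * g (am a).
Proof.
rewrite (bigD1 (ap a)) //= (bigD1 (am a)) /=; last by rewrite am_ap.
rewrite big1 ?addr0 // => b /andP[nb1 nb2]; rewrite nonadj ?mul0r //.
by apply/negP => /adj_only; rewrite (negPf nb1) (negPf nb2).
Qed.

Definition dist (b : 'I_n) : nat :=
  if (val v <= val b)%N then (val b - val v)%N else (val b + n - val v)%N.
Definition Dp (D : nat) : nat := if D.+1 == n then 0%N else D.+1.
Definition Dm (D : nat) : nat := if D == 0%N then (n - 1)%N else (D - 1)%N.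

Lemma dist_lt b : (dist b < n)%N.
Proof. rewrite /dist; have := ltv b; have := ltn_ord b; have := ltv v; have := ltn_ord v; case: ifP; lia. Qed.
Lemma dist_ap a : dist (ap a) = Dp (dist a).
Proof.
rewrite /dist /Dp /=; have := ltv a; have := ltn_ord a; have := ltv v; have := ltn_ord v.
by (repeat case: ifP); lia.
Qed.
Lemma dist_am a : dist (am a) = Dm (dist a).
Proof.
rewrite /dist /Dm /=; have := ltv a; have := ltn_ord a; have := ltv v; have := ltn_ord v.
by (repeat case: ifP); lia.
Qed.
Lemma dist0 b : (b == v) = (dist b == 0%N).
Proof. rewrite ordE /dist; have := ltv b; have := ltn_ord b; have := ltv v; have := ltn_ord v; case: ifP; lia. Qed.
Lemma dist_inj : injective (fun b => Ordinal (dist_lt b)).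
Proof.
move=> b c /(congr1 val) /=; rewrite /dist => h; apply/eqP; rewrite ordE.
move: h; have := ltv b; have := ltn_ord b; have := ltv c; have := ltn_ord c; have := ltv v; have := ltn_ord v.
by (repeat case: ifP); lia.
Qed.

Definition f (D : nat) : R :=
  if D == 0%N then 1 else if odd D then 0 else (-1) ^+ (D./2) * beta.
Definition wt (D E : nat) : R := if (D == 0%N) || (E == 0%N) then beta else 1.

Lemma f_odd E : odd E -> f E = 0.
Proof. by move=> oE; rewrite /f oE; case: eqP => // E0; rewrite E0 in oE. Qed.

Lemma f_even h : h != 0%N -> f h.*2 = (-1) ^+ h * beta.
Proof.
move=> h0; rewrite /f odd_double doubleK; case: eqP => //.
by move=> /eqP; rewrite double_eq0 (negPf h0).
Qed.

Lemma G0 D : (D < n)%N -> wt D (Dp D) * f (Dp D) + wt D (Dm D) * f (Dm D) = 0.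
Proof.
move=> Dn; case: (boolP (odd D)) => oD; last first.
  rewrite [f (Dp D)]f_odd; last by rewrite /Dp; case: ifP; lia.
  rewrite [f (Dm D)]f_odd; last by rewrite /Dm; case: ifP; lia.
  by rewrite !mulr0 addr0.
have hD := odd_double_half D; rewrite oD in hD; set h := D./2 in hD.
have L1 : wt D (Dm D) * f (Dm D) = (-1) ^+ h * beta.
  have -> : Dm D = h.*2 by rewrite /Dm; case: ifP; lia.
  have [->|h0] := eqVneq h 0%N.
    by rewrite /wt /f /= orbT expr0 mul1r mulr1.
  rewrite f_even // /wt.
  have -> : (D == 0%N) || (h.*2 == 0%N) = false by lia.
  by rewrite mul1r.
have L2 : wt D (Dp D) * f (Dp D) = (-1) ^+ h.+1 * beta.
  rewrite /Dp; case: ifP => Dn1.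
    rewrite /wt /f /= orbT mulr1.
    have -> : h.+1 = k.*2 by lia.
    by rewrite -signr_odd odd_double expr0 mul1r.
  have -> : D.+1 = h.+1.*2 by lia.
  rewrite f_even // /wt.
  have -> : (D == 0%N) || (h.+1.*2 == 0%N) = false by lia.
  by rewrite mul1r.
by rewrite L1 L2 exprS mulN1r mulNr addrC subrr.
Qed.

Lemma rowA (a : 'I_n) : \sum_b A a b * f (dist b) = 0.
Proof.
rewrite (row_sum a (fun b => f (dist b))) !Aadj ?adj_ap ?adj_am //.
rewrite !dist0 dist_ap dist_am.
exact: (G0 _ (dist_lt a)).
Qed.

Lemma sumf m : (1 <= m)%N ->
  \sum_(0 <= i < m.*2) f i ^+ 2 = 1 + (m%:R - 1) * beta ^+ 2.
Proof.
elim: m => [//|m IH] _.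
have [->|m0] := eqVneq m 0%N.
  rewrite /= !big_nat_recr //= big_geq // /f /= add0r expr1n.
  by rewrite subrr mul0r addr0 expr0n /= addr0.
rewrite doubleS !big_nat_recr //= IH; last by lia.
rewrite f_even // f_odd; last by rewrite /= odd_double.
rewrite (_ : (0 : R) ^+ 2 = 0); last by rewrite expr2 mulr0.
rewrite addr0 exprMn exprAC sqrrN !expr1n mul1r -natr1.
ring.
Qed.

Lemma normx : \sum_b f (dist b) ^+ 2 = 1 + (2 * k%:R - 1) * beta ^+ 2.
Proof.
have -> : \sum_b f (dist b) ^+ 2 = \sum_(i < n) f i ^+ 2.
  by rewrite [RHS](reindex_inj dist_inj).
rewrite -(big_mkord xpredT (fun i => f i ^+ 2)).
have -> : (4 * k = (k.*2).*2)%N by lia.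
rewrite sumf; last by lia.
by rewrite -mul2n natrM.
Qed.

Lemma graph_vec : exists xr : 'I_n -> R, [/\ xr v = 1,
    forall a, \sum_b cycle_weighted alpha u v w a b * xr b = 0 &
    \sum_b xr b ^+ 2 = 1 + (2 * k%:R - 1) * alpha^-1 ^+ 2].
Proof.
exists (fun b => f (dist b)); split.
- by have -> : dist v = 0%N by rewrite /dist leqnn subnn.
- exact: rowA.
- exact: normx.
Qed.

End Graph.


From mathcomp Require Import ring lra.

Theorem proposition46 (R : realType) (k : nat) (alpha : R) (u v w : 'I_(4 * k)) :
  (1 <= k)%N -> alpha != 0 ->
  cyc_adj u v -> cyc_adj v w -> u != w ->
  Num.sqrt (2 * k%:R - 1) < `|alpha| ->
  sedentary (cycle_weighted alpha u v w) v.
Proof.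
move=> k1 a0 uv vw uw hs.
have [xr [xv Ax xn]] := @graph_vec R k alpha u v w k1 uv vw uw.
set q := 2 * k%:R - 1 in hs xn.
have q1 : 1 <= q.
  rewrite /q lerBrDr; have : (1 <= k%:R :> R) by rewrite ler1n.
  by move=> h; lra.
have a2 : 0 < alpha ^+ 2 by rewrite exprn_even_gt0.
have hq : q < alpha ^+ 2.
  by rewrite -sqrtr_sqr ltr_sqrt // in hs.
exists ((alpha ^+ 2 - q) / (alpha ^+ 2 + q)); split.
  apply/andP; split.
    by apply: divr_gt0; lra.
  by rewrite ler_pdivrMr; lra.
move=> t _; apply: (@sed_from_vec R _ _ v xr _ _ (@cw_sym R _ alpha u v w) xv Ax xn).
  have : 0 <= q * alpha^-1 ^+ 2 by apply: mulr_ge0; [lra | exact: sqr_ge0].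
  by move=> h; lra.
rewrite le_eqVlt; apply/orP; left; apply/eqP.
field; rewrite a0 /=; apply: lt0r_neq0; lra.
Qed.
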